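(* Let $a\in C^1([0,T]\times[-\pi,\pi])$ solve $$\partial_t a+\Big(\int_{-\pi}^x a(t,\bar x)\,d\bar x\Big)\partial_x a-a^2+\frac1\pi\int_{-\pi}^{\pi}a^2\,dx=0,\qquad \int_{-\pi}^\pi a(t,x)dx=0.$$ Assume $x\mapsto a(0,x)$ attains its maximum at $x_0^*$. Then for all $t\in[0,T]$, $x\mapsto a(t,x)$ attains its maximum at $x^*(t)$, where $x^*$ is the characteristic starting from $x_0^*$.
   Context: The characteristic starting from $x_0^*$ is the solution of $\frac{d}{dt}x^*(t)=\int_{-\pi}^{x^*(t)}a(t,x)\,dx$, $x^*(0)=x_0^*$. *)

(* Defs.v *)
From Stdlib Require Import Reals.
From Coquelicot Require Import Coquelicot.
Open Scope R_scope.

Definition Icc (lo hi : R) (x : R) : Prop := lo <= x <= hi.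

(* f has derivative l at x, relative to the set D (one-sided at endpoints
   of a closed interval). *)
Definition has_deriv_within (D : R -> Prop) (f : R -> R) (x l : R) : Prop :=
  forall eps : R, 0 < eps -> exists delta : R, 0 < delta /\
    forall y : R, D y -> Rabs (y - x) < delta ->
      Rabs (f y - f x - l * (y - x)) <= eps * Rabs (y - x).

Definition cont_on_rect (t0 t1 x0 x1 : R) (g : R -> R -> R) : Prop :=
  forall t x, Icc t0 t1 t -> Icc x0 x1 x ->
  forall eps : R, 0 < eps -> exists delta : R, 0 < delta /\
    forall s y, Icc t0 t1 s -> Icc x0 x1 y ->
      Rabs (s - t) < delta -> Rabs (y - x) < delta ->
      Rabs (g s y - g t x) < eps.

Definition C1_rect_with (t0 t1 x0 x1 : R) (a at_ ax : R -> R -> R) : Prop :=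
  cont_on_rect t0 t1 x0 x1 at_ /\ cont_on_rect t0 t1 x0 x1 ax /\
  (forall t x, Icc t0 t1 t -> Icc x0 x1 x ->
     has_deriv_within (Icc t0 t1) (fun s => a s x) t (at_ t x) /\
     has_deriv_within (Icc x0 x1) (fun y => a t y) x (ax t x)).

(* Main.v *)
Require Import Defs.
From Stdlib Require Import Reals.
From Coquelicot Require Import Coquelicot.
From Stdlib Require Import Lra Lia IndefiniteDescription Classical.
Open Scope R_scope.

Lemma hd_cont D f x l : has_deriv_within D f x l -> forall eps, 0 < eps ->
  exists delta, 0 < delta /\ forall y, D y -> Rabs (y - x) < delta -> Rabs (f y - f x) < eps.
Proof.
intros H eps He. destruct (H 1 Rlt_0_1) as [d [Hd Hy]].
assert (Hl : 0 < Rabs l + 1) by (pose proof (Rabs_pos l); lra).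
exists (Rmin d (eps / (Rabs l + 1))). split.
{ apply Rmin_pos; [lra| apply Rdiv_lt_0_compat; lra]. }
intros y Dy Hyx.
assert (H1 : Rabs (y - x) < d) by (eapply Rlt_le_trans; [exact Hyx| apply Rmin_l]).
assert (H2 : Rabs (y - x) < eps / (Rabs l + 1)) by (eapply Rlt_le_trans; [exact Hyx| apply Rmin_r]).
specialize (Hy y Dy H1).
replace (f y - f x) with ((f y - f x - l*(y-x)) + l*(y-x)) by ring.
eapply Rle_lt_trans; [apply Rabs_triang|]. rewrite Rabs_mult.
assert (H3 : (Rabs l + 1) * Rabs (y - x) < eps).
{ replace eps with ((Rabs l + 1) * (eps / (Rabs l + 1))) by (field; lra).
  apply Rmult_lt_compat_l; lra. }
lra.
Qed.

Lemma hd_interior lo hi f x l : lo < x < hi -> has_deriv_within (Icc lo hi) f x l ->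
  derivable_pt_lim f x l.
Proof.
intros Hx H eps He. destruct (H (eps/2)) as [d [Hd Hy]]; [lra|].
assert (Hm: 0 < Rmin d (Rmin (x - lo) (hi - x))) by (repeat apply Rmin_pos; lra).
exists (mkposreal _ Hm). intros h Hh0 Hh. simpl in Hh.
assert (Hh1 : Rabs h < d) by (eapply Rlt_le_trans; [exact Hh| apply Rmin_l]).
assert (Hh2 : Rabs h < Rmin (x - lo) (hi - x)) by (eapply Rlt_le_trans; [exact Hh| apply Rmin_r]).
assert (Hh3 : Rabs h < x - lo) by (eapply Rlt_le_trans; [exact Hh2| apply Rmin_l]).
assert (Hh4 : Rabs h < hi - x) by (eapply Rlt_le_trans; [exact Hh2| apply Rmin_r]).
assert (Hi : Icc lo hi (x + h)).
{ unfold Icc. destruct (Rabs_def2 _ _ Hh3). destruct (Rabs_def2 _ _ Hh4). lra. }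
specialize (Hy (x+h) Hi). replace (x + h - x) with h in Hy by ring.
specialize (Hy Hh1).
replace ((f (x + h) - f x) / h - l) with ((f (x + h) - f x - l * h) / h) by (field; auto).
unfold Rdiv. rewrite Rabs_mult, Rabs_inv.
assert (Hp : 0 < Rabs h) by (apply Rabs_pos_lt; auto).
apply Rle_lt_trans with (eps/2); [|lra].
apply Rmult_le_reg_r with (Rabs h); [exact Hp|].
rewrite Rmult_assoc, Rinv_l; lra.
Qed.

Definition clamp (lo hi y : R) : R :=
  if Rle_dec y lo then lo else if Rle_dec hi y then hi else y.

Lemma clamp_in lo hi y : lo <= hi -> Icc lo hi (clamp lo hi y).
Proof. intros; unfold clamp, Icc; destruct (Rle_dec y lo); [lra|]; destruct (Rle_dec hi y); lra. Qed.

Lemma clamp_id lo hi y : Icc lo hi y -> clamp lo hi y = y.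
Proof. unfold clamp, Icc; intros; destruct (Rle_dec y lo); [lra|]; destruct (Rle_dec hi y); lra. Qed.

Lemma clamp_lip lo hi c y : Icc lo hi c -> Rabs (clamp lo hi y - c) <= Rabs (y - c).
Proof.
unfold clamp, Icc; intros.
destruct (Rle_dec y lo); [|destruct (Rle_dec hi y)];
  unfold Rabs; repeat destruct Rcase_abs; lra.
Qed.

Lemma MV lo hi f df p q : Icc lo hi p -> Icc lo hi q ->
  (forall y, Icc lo hi y -> has_deriv_within (Icc lo hi) f y (df y)) ->
  exists c, Rmin p q <= c <= Rmax p q /\ f q - f p = df c * (q - p).
Proof.
intros Hp Hq Hd.
assert (Hlh : lo <= hi) by (unfold Icc in Hp; lra).
set (g := fun y => f (clamp lo hi y)).
assert (Hmin : lo <= Rmin p q) by (unfold Icc in *; apply Rmin_glb; lra).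
assert (Hmax : Rmax p q <= hi) by (unfold Icc in *; apply Rmax_lub; lra).
destruct (MVT_gen g p q df) as [c [Hc Heq]].
- intros y Hy. apply is_derive_Reals.
  apply (hd_interior lo hi); [lra|].
  assert (Hy' : Icc lo hi y) by (unfold Icc; lra).
  intros eps He. destruct (Hd y Hy' eps He) as [d [Hd0 Hd1]].
  exists d; split; auto. intros z Hz Hzy. unfold g.
  rewrite (clamp_id _ _ _ Hz), (clamp_id _ _ _ Hy'). auto.
- intros y Hy.
  assert (Hy' : Icc lo hi y) by (unfold Icc; lra).
  intros eps He. destruct (hd_cont _ _ _ _ (Hd y Hy') eps He) as [d [Hd0 Hd1]].
  exists d; split; auto. intros z [_ Hz]. unfold g, R_dist in *. simpl in *.
  unfold R_dist in Hz.
  rewrite (clamp_id _ _ y Hy').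
  apply Hd1; [apply clamp_in; auto|].
  eapply Rle_lt_trans; [apply clamp_lip; auto| exact Hz].
- exists c; split; [exact Hc|]. unfold g in Heq.
  rewrite (clamp_id _ _ _ Hp), (clamp_id _ _ _ Hq) in Heq. exact Heq.
Qed.

Lemma between_abs p q c : Rmin p q <= c <= Rmax p q -> Rabs (c - p) <= Rabs (q - p).
Proof.
unfold Rmin, Rmax; destruct (Rle_dec p q); intros; unfold Rabs; repeat destruct Rcase_abs; lra.
Qed.

Lemma between_in lo hi p q c : Icc lo hi p -> Icc lo hi q -> Rmin p q <= c <= Rmax p q -> Icc lo hi c.
Proof.
unfold Icc, Rmin, Rmax; destruct (Rle_dec p q); intros; lra.
Qed.

Lemma a_cont T lo hi a at_ ax : C1_rect_with 0 T lo hi a at_ ax -> cont_on_rect 0 T lo hi a.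
Proof.
intros [Hat [Hax Hd]] t x Ht Hx eps He.
destruct (Hax t x Ht Hx 1 Rlt_0_1) as [d1 [Hd1 H1]].
set (L := Rabs (ax t x) + 1).
assert (HL : 0 < L) by (unfold L; pose proof (Rabs_pos (ax t x)); lra).
destruct (hd_cont _ _ _ _ (proj1 (Hd t x Ht Hx)) (eps/2)) as [d2 [Hd2 H2]]; [lra|].
exists (Rmin d1 (Rmin d2 (eps/(2*L)))). split.
{ repeat apply Rmin_pos; try lra. apply Rdiv_lt_0_compat; lra. }
intros s y Hs Hy Hst Hyx.
assert (Hst1 : Rabs (s - t) < d1) by (eapply Rlt_le_trans; [exact Hst| apply Rmin_l]).
assert (Hst2 : Rabs (s - t) < d2) by (eapply Rlt_le_trans; [exact Hst| eapply Rle_trans; [apply Rmin_r|apply Rmin_l]]).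
assert (Hyx1 : Rabs (y - x) < d1) by (eapply Rlt_le_trans; [exact Hyx| apply Rmin_l]).
assert (Hyx3 : Rabs (y - x) < eps/(2*L)) by (eapply Rlt_le_trans; [exact Hyx| eapply Rle_trans; [apply Rmin_r|apply Rmin_r]]).
destruct (MV lo hi (fun y => a s y) (fun y => ax s y) x y Hx Hy) as [c [Hc Heq]].
{ intros z Hz. exact (proj2 (Hd s z Hs Hz)). }
assert (Hcx : Rabs (c - x) <= Rabs (y - x)) by (apply between_abs; auto).
assert (Hcin : Icc lo hi c) by (eapply between_in; [exact Hx|exact Hy|exact Hc]).
assert (Hbc : Rabs (ax s c) <= L).
{ assert (Rabs (ax s c - ax t x) < 1) by (apply H1; auto; lra).
  unfold L. pose proof (Rabs_triang_inv (ax s c) (ax t x)). lra. }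
assert (Hsx := H2 s Hs Hst2). simpl in Hsx.
replace (a s y - a t x) with ((a s y - a s x) + (a s x - a t x)) by ring.
eapply Rle_lt_trans; [apply Rabs_triang|].
rewrite Heq, Rabs_mult.
assert (Rabs (ax s c) * Rabs (y - x) <= L * (eps / (2*L))).
{ apply Rmult_le_compat; try apply Rabs_pos; lra. }
replace (L * (eps / (2*L))) with (eps/2) in H by (field; lra).
lra.
Qed.

Lemma adh_in (xn : nat -> R) c d x : (forall n, c <= xn n <= d) ->
  (forall del, 0 < del -> forall N, exists p, (N <= p)%nat /\ Rabs (xn p - x) < del) ->
  c <= x <= d.
Proof.
intros Hn H. split.
- destruct (Rle_dec c x) as [|Hc]; auto. exfalso.
  destruct (H (c - x) ltac:(lra) 0%nat) as [p [_ Hp]].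
  specialize (Hn p). destruct (Rabs_def2 _ _ Hp). lra.
- destruct (Rle_dec x d) as [|Hc]; auto. exfalso.
  destruct (H (x - d) ltac:(lra) 0%nat) as [p [_ Hp]].
  specialize (Hn p). destruct (Rabs_def2 _ _ Hp). lra.
Qed.

Lemma BW1 (xn : nat -> R) c d : (forall n, c <= xn n <= d) ->
  exists x, c <= x <= d /\
   forall del, 0 < del -> forall N, exists p, (N <= p)%nat /\ Rabs (xn p - x) < del.
Proof.
intros Hn.
destruct (Bolzano_Weierstrass xn _ (compact_P3 c d) Hn) as [x Hx].
assert (H : forall del, 0 < del -> forall N, exists p, (N <= p)%nat /\ Rabs (xn p - x) < del).
{ intros del Hdel N.
  destruct (Hx (disc x (mkposreal del Hdel)) N) as [p [Hp1 Hp2]].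
  - exists (mkposreal del Hdel). intros y Hy; exact Hy.
  - exists p; split; auto. }
exists x; split; auto. eapply adh_in; eauto.
Qed.

Lemma inv_small (del : R) : 0 < del -> exists K : nat, forall q, (K <= q)%nat -> / INR (S q) < del.
Proof.
intros Hd. destruct (archimed_cor1 del Hd) as [K [HK HK0]].
exists K. intros q Hq. eapply Rle_lt_trans; [|exact HK].
apply Rinv_le_contravar. apply lt_0_INR; auto. apply le_INR. lia.
Qed.

Lemma BW2 (tn xn : nat -> R) a b c d : (forall n, a <= tn n <= b) -> (forall n, c <= xn n <= d) ->
 exists t x, a <= t <= b /\ c <= x <= d /\ forall del, 0 < del -> forall N, exists p,
   (N <= p)%nat /\ Rabs (tn p - t) < del /\ Rabs (xn p - x) < del.
Proof.
intros Ht Hx.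
destruct (BW1 tn a b Ht) as [t [Htin Hta]].
assert (Hk : forall k : nat, exists p, (k <= p)%nat /\ Rabs (tn p - t) < / INR (S k)).
{ intros k. apply Hta. apply Rinv_0_lt_compat, lt_0_INR; lia. }
destruct (functional_choice _ Hk) as [phi Hphi].
destruct (BW1 (fun k => xn (phi k)) c d (fun k => Hx (phi k))) as [x [Hxin Hxa]].
exists t, x; split; auto; split; auto.
intros del Hdel N.
destruct (inv_small del Hdel) as [K HK].
destruct (Hxa del Hdel (max N K)) as [q [Hq1 Hq2]].
exists (phi q). destruct (Hphi q) as [Hp1 Hp2].
split; [lia|]. split; auto.
eapply Rlt_trans; [exact Hp2|]. apply HK. lia.
Qed.

Lemma a_bound T lo hi a : cont_on_rect 0 T lo hi a ->
  exists B, forall t x, Icc 0 T t -> Icc lo hi x -> Rabs (a t x) <= B.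
Proof.
intros Hc.
destruct (classic (exists B, forall t x, Icc 0 T t -> Icc lo hi x -> Rabs (a t x) <= B)) as [H|H]; auto.
exfalso.
assert (Hn : forall n:nat, exists p : R*R, Icc 0 T (fst p) /\ Icc lo hi (snd p) /\ INR n < Rabs (a (fst p) (snd p))).
{ intros n. apply NNPP; intro Hc'. apply H. exists (INR n). intros t x Ht Hx.
  apply Rnot_lt_le. intro. apply Hc'. exists (t,x). auto. }
destruct (functional_choice _ Hn) as [f Hf].
destruct (BW2 (fun n => fst (f n)) (fun n => snd (f n)) 0 T lo hi) as [t [x [Ht [Hx Hadh]]]].
{ intros n; apply (Hf n). } { intros n; apply (Hf n). }
destruct (Hc t x Ht Hx 1 Rlt_0_1) as [d [Hd Hd']].
destruct (INR_unbounded (Rabs (a t x) + 1)) as [N HN].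
destruct (Hadh d Hd N) as [p [Hp1 [Hp2 Hp3]]].
destruct (Hf p) as [Hf1 [Hf2 Hf3]].
specialize (Hd' _ _ Hf1 Hf2 Hp2 Hp3).
pose proof (Rabs_triang_inv (a (fst (f p)) (snd (f p))) (a t x)).
apply le_INR in Hp1. lra.
Qed.

Lemma max_deriv0 lo hi f x l : lo < x < hi -> has_deriv_within (Icc lo hi) f x l ->
  (forall y, Icc lo hi y -> f y <= f x) -> l = 0.
Proof.
intros Hx Hd Hm.
pose proof (hd_interior _ _ _ _ _ Hx Hd) as Hl.
pose proof (deriv_maximum f lo hi x (exist _ l Hl) (proj1 Hx) (proj2 Hx)) as H.
simpl in H. apply H. intros y H1 H2. apply Hm. unfold Icc; lra.
Qed.

Lemma hd_plus D f g x l1 l2 : has_deriv_within D f x l1 -> has_deriv_within D g x l2 ->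
  has_deriv_within D (fun y => f y + g y) x (l1 + l2).
Proof.
intros Hf Hg eps He.
destruct (Hf (eps/2)) as [d1 [Hd1 H1]]; [lra|].
destruct (Hg (eps/2)) as [d2 [Hd2 H2]]; [lra|].
exists (Rmin d1 d2); split; [apply Rmin_pos; lra|].
intros y Dy Hy.
assert (Rabs (y - x) < d1) by (eapply Rlt_le_trans; [exact Hy|apply Rmin_l]).
assert (Rabs (y - x) < d2) by (eapply Rlt_le_trans; [exact Hy|apply Rmin_r]).
specialize (H1 y Dy H). specialize (H2 y Dy H0).
replace (f y + g y - (f x + g x) - (l1 + l2) * (y - x)) with
  ((f y - f x - l1 * (y - x)) + (g y - g x - l2 * (y - x))) by ring.
eapply Rle_trans; [apply Rabs_triang|]. lra.
Qed.

Lemma hd_opp D f x l : has_deriv_within D f x l -> has_deriv_within D (fun y => - f y) x (- l).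
Proof.
intros Hf eps He. destruct (Hf eps He) as [d [Hd H]]. exists d; split; auto.
intros y Dy Hy. specialize (H y Dy Hy).
replace (- f y - - f x - - l * (y - x)) with (- (f y - f x - l * (y - x))) by ring.
rewrite Rabs_Ropp; auto.
Qed.

Lemma hd_of_lim D f x l : derivable_pt_lim f x l -> has_deriv_within D f x l.
Proof.
intros Hf eps He. destruct (Hf eps He) as [d Hd]. exists d; split; [apply cond_pos|].
intros y Dy Hy.
destruct (Req_dec y x) as [E|E].
{ subst. replace (f x - f x - l * (x - x)) with 0 by ring. rewrite Rminus_diag, Rabs_R0. lra. }
assert (Hh : y - x <> 0) by lra.
specialize (Hd (y - x) Hh Hy). replace (x + (y - x)) with y in Hd by ring.
replace (f y - f x - l * (y - x)) with ((y - x) * ((f y - f x) / (y - x) - l)) by (field; auto).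
rewrite Rabs_mult. rewrite Rmult_comm. apply Rmult_le_compat_r; [apply Rabs_pos|lra].
Qed.

Lemma left_deriv_nonneg T g t L : has_deriv_within (Icc 0 T) g t L -> 0 < t -> t <= T -> g t = 0 ->
  (forall r, 0 <= r < t -> g r <= 0) -> 0 <= L.
Proof.
intros Hd Ht HtT Hg Hr.
destruct (Rle_dec 0 L) as [|HL]; auto. exfalso.
destruct (Hd (-L/2)) as [d [Hd0 H]]; [lra|].
set (r := Rmax 0 (t - d/2)).
assert (Hr1 : 0 <= r) by apply Rmax_l.
assert (Hr2 : t - d/2 <= r) by apply Rmax_r.
assert (Hr3 : r < t) by (unfold r; apply Rmax_lub_lt; lra).
assert (Habs : Rabs (r - t) = t - r) by (rewrite Rabs_left; lra).
specialize (H r ltac:(unfold Icc; lra) ltac:(rewrite Habs; lra)).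
rewrite Habs, Hg in H. specialize (Hr r ltac:(lra)).
assert (Hx : - (g r - 0 - L * (r - t)) <= - L / 2 * (t - r)) by (eapply Rle_trans; [apply Rle_abs|rewrite Rabs_Ropp; exact H]).
assert (0 < (t - r) * (- L / 2)) by (apply Rmult_lt_0_compat; lra).
nra.
Qed.

Lemma lt_min_split x d1 d2 : x < Rmin d1 d2 -> x < d1 /\ x < d2.
Proof. intros H; split; (eapply Rlt_le_trans; [exact H|]); [apply Rmin_l|apply Rmin_r]. Qed.

Lemma chain T lo hi a at_ ax X D t :
  C1_rect_with 0 T lo hi a at_ ax ->
  (forall s, Icc 0 T s -> Icc lo hi (X s)) -> Icc 0 T t ->
  has_deriv_within (Icc 0 T) X t D ->
  has_deriv_within (Icc 0 T) (fun s => a s (X s)) t (at_ t (X t) + ax t (X t) * D).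
Proof.
intros HC HX Ht HD. pose proof HC as [Hat [Hax Hd]].
intros eps He.
set (y0 := X t). assert (Hy0 : Icc lo hi y0) by (apply HX; auto).
set (ax0 := ax t y0).
assert (HDp : 0 < Rabs D + 1) by (pose proof (Rabs_pos D); lra).
assert (Haxp : 0 < Rabs ax0 + 1) by (pose proof (Rabs_pos ax0); lra).
set (e1 := eps/3). set (e2 := eps / (3 * (Rabs D + 1))). set (e3 := eps / (3*(Rabs ax0 + 1))).
assert (He1 : 0 < e1) by (unfold e1; lra).
assert (He2 : 0 < e2) by (unfold e2; apply Rdiv_lt_0_compat; lra).
assert (He3 : 0 < e3) by (unfold e3; apply Rdiv_lt_0_compat; lra).
destruct (Hat t y0 Ht Hy0 e1 He1) as [d1 [Hd1 H1]].
destruct (hd_cont _ _ _ _ HD d1 Hd1) as [dx1 [Hdx1 HX1]].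
destruct (proj2 (Hd t y0 Ht Hy0) e2 He2) as [d2 [Hd2 H2]].
destruct (hd_cont _ _ _ _ HD d2 Hd2) as [dx2 [Hdx2 HX2]].
destruct (HD 1 Rlt_0_1) as [d3 [Hd3 H3]].
destruct (HD e3 He3) as [d4 [Hd4 H4]].
exists (Rmin (Rmin d1 dx1) (Rmin (Rmin dx2 d3) d4)).
split. { repeat apply Rmin_pos; lra. }
intros s Hs Hst.
apply lt_min_split in Hst as [Hst1 Hst2].
apply lt_min_split in Hst1 as [Hsd1 Hsdx1].
apply lt_min_split in Hst2 as [Hst2 Hsd4].
apply lt_min_split in Hst2 as [Hsdx2 Hsd3].
set (ys := X s). assert (Hys : Icc lo hi ys) by (apply HX; auto).
assert (Hyy1 : Rabs (ys - y0) < d1) by (apply HX1; auto).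
assert (Hyy2 : Rabs (ys - y0) < d2) by (apply HX2; auto).
destruct (MV 0 T (fun r => a r ys) (fun r => at_ r ys) t s Ht Hs) as [c [Hc Heq]].
{ intros r Hr. exact (proj1 (Hd r ys Hr Hys)). }
assert (Hct : Rabs (c - t) <= Rabs (s - t)) by (apply between_abs; auto).
assert (Hcin : Icc 0 T c) by (eapply between_in; [exact Ht|exact Hs|exact Hc]).
assert (Hatc : Rabs (at_ c ys - at_ t y0) < e1) by (apply H1; auto; lra).
set (h := s - t).
assert (HT1 : Rabs (a s ys - a t ys - at_ t y0 * h) <= e1 * Rabs h).
{ simpl in Heq. rewrite Heq. unfold h.
  replace (at_ c ys * (s - t) - at_ t y0 * (s - t)) with ((at_ c ys - at_ t y0) * (s - t)) by ring.
  rewrite Rabs_mult. apply Rmult_le_compat_r; [apply Rabs_pos|lra]. }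
assert (HT2 : Rabs (a t ys - a t y0 - ax0 * (ys - y0)) <= e2 * Rabs (ys - y0)) by (apply H2; auto).
assert (HT3 : Rabs (ys - y0 - D * h) <= e3 * Rabs h) by (apply H4; auto).
assert (HXb : Rabs (ys - y0) <= (Rabs D + 1) * Rabs h).
{ specialize (H3 s Hs Hsd3). fold ys y0 h in H3.
  replace (ys - y0) with ((ys - y0 - D * h) + D * h) by ring.
  eapply Rle_trans; [apply Rabs_triang|]. rewrite Rabs_mult. lra. }
assert (Hb2 : e2 * Rabs (ys - y0) <= eps/3 * Rabs h).
{ eapply Rle_trans; [apply Rmult_le_compat_l; [lra|exact HXb]|].
  rewrite <- Rmult_assoc. unfold e2. right. f_equal. field. lra. }
assert (Hb3 : Rabs ax0 * Rabs (ys - y0 - D * h) <= eps/3 * Rabs h).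
{ eapply Rle_trans; [apply Rmult_le_compat_l; [apply Rabs_pos|exact HT3]|].
  rewrite <- Rmult_assoc. apply Rmult_le_compat_r; [apply Rabs_pos|].
  unfold e3. apply Rle_trans with ((Rabs ax0 + 1) * (eps / (3 * (Rabs ax0 + 1)))).
  - apply Rmult_le_compat_r; [left; apply Rdiv_lt_0_compat; lra|lra].
  - right; field; lra. }
fold y0 ys. fold ax0. fold h.
replace (a s ys - a t y0 - (at_ t y0 + ax0 * D) * h) with
  ((a s ys - a t ys - at_ t y0 * h) + (a t ys - a t y0 - ax0 * (ys - y0)) + ax0 * (ys - y0 - D * h)) by ring.
eapply Rle_trans; [apply Rabs_triang|].
rewrite Rabs_mult.
eapply Rle_trans; [apply Rplus_le_compat_r; apply Rabs_triang|].
unfold e1 in HT1. lra.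
Qed.

Lemma hd_ext D f g x l l' : (forall y, f y = g y) -> l = l' -> has_deriv_within D f x l -> has_deriv_within D g x l'.
Proof.
intros Hfg Hl Hf eps He. destruct (Hf eps He) as [d [Hd H]]. exists d; split; auto.
intros y Dy Hy. rewrite <- !Hfg, <- Hl. auto.
Qed.

Lemma cont_sub T lo hi g v : cont_on_rect 0 T lo hi g ->
  (forall t, Icc 0 T t -> forall e, 0 < e -> exists d, 0 < d /\ forall s, Icc 0 T s -> Rabs (s - t) < d -> Rabs (v s - v t) < e) ->
  cont_on_rect 0 T lo hi (fun s y => g s y - v s).
Proof.
intros Hg Hv t x Ht Hx eps He.
destruct (Hg t x Ht Hx (eps/2)) as [d1 [Hd1 H1]]; [lra|].
destruct (Hv t Ht (eps/2)) as [d2 [Hd2 H2]]; [lra|].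
exists (Rmin d1 d2); split; [apply Rmin_pos; lra|].
intros s y Hs Hy Hst Hyx.
apply lt_min_split in Hst as [Hs1 Hs2]. apply lt_min_split in Hyx as [Hy1 Hy2].
specialize (H1 s y Hs Hy Hs1 Hy1). specialize (H2 s Hs Hs2).
replace (g s y - v s - (g t x - v t)) with ((g s y - g t x) - (v s - v t)) by ring.
eapply Rle_lt_trans; [apply Rabs_triang|]. rewrite Rabs_Ropp. lra.
Qed.

Theorem lemma2p3 (T : R) (a at_ ax : R -> R -> R) (x0s : R) (xs : R -> R) :
  0 < T ->
  C1_rect_with 0 T (- PI) PI a at_ ax ->
  (forall t x, Icc 0 T t -> Icc (- PI) PI x ->
     at_ t x + RInt (fun y => a t y) (- PI) x * ax t x - (a t x) ^ 2
       + / PI * RInt (fun y => (a t y) ^ 2) (- PI) PI = 0) ->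
  (forall t, Icc 0 T t -> RInt (fun y => a t y) (- PI) PI = 0) ->
  Icc (- PI) PI x0s ->
  (forall x, Icc (- PI) PI x -> a 0 x <= a 0 x0s) ->
  xs 0 = x0s ->
  (forall t, Icc 0 T t -> Icc (- PI) PI (xs t)) ->
  (forall t, Icc 0 T t ->
     has_deriv_within (Icc 0 T) xs t (RInt (fun y => a t y) (- PI) (xs t))) ->
  forall t, Icc 0 T t -> forall x, Icc (- PI) PI x -> a t x <= a t (xs t).
Proof.
intros HT HC Heq Hmean Hx0 Hmax Hxs0 HXin HXd.
set (u := fun s => a s (xs s)).
set (I := fun t => / PI * RInt (fun y => (a t y) ^ 2) (- PI) PI).
assert (Hpi : - PI < PI) by (pose proof PI_RGT_0; lra).
pose proof (a_cont _ _ _ _ _ _ HC) as Hac.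
destruct (a_bound _ _ _ _ Hac) as [B HB].
assert (HT0 : Icc 0 T 0) by (unfold Icc; lra).
assert (HB0 : 0 <= B) by (eapply Rle_trans; [apply Rabs_pos|apply (HB 0 x0s HT0 Hx0)]).
set (K := 2*B+1).
assert (Hu : forall t, Icc 0 T t -> has_deriv_within (Icc 0 T) u t (u t ^ 2 - I t)).
{ intros t Ht. pose proof (chain _ _ _ _ _ _ xs _ t HC HXin Ht (HXd t Ht)) as H.
  eapply hd_ext; [| |exact H]; [reflexivity|].
  specialize (Heq t (xs t) Ht (HXin t Ht)). unfold u, I. lra. }
assert (Hclaim : forall eps, 0 < eps -> forall t x, Icc 0 T t -> Icc (- PI) PI x ->
          a t x - u t <= eps * exp (K * t)).
{ intros eps He.
  set (v := fun s => u s + eps * exp (K * s)).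
  set (z := fun s y => a s y - v s).
  assert (Hv : forall t, Icc 0 T t -> has_deriv_within (Icc 0 T) v t (u t ^ 2 - I t + eps * (K * exp (K * t)))).
  { intros t Ht. apply hd_plus; [apply Hu; auto|].
    apply hd_of_lim. apply is_derive_Reals. auto_derive; auto. ring. }
  assert (Hzd : forall t x, Icc 0 T t -> Icc (- PI) PI x ->
     has_deriv_within (Icc 0 T) (fun s => z s x) t (at_ t x - (u t ^ 2 - I t + eps * (K * exp (K * t))))).
  { intros t x Ht Hx. 
    pose proof (hd_plus _ _ _ _ _ _ (proj1 (proj2 (proj2 HC) t x Ht Hx)) (hd_opp _ _ _ _ (Hv t Ht))) as H.
    eapply hd_ext; [| |exact H]; [intros; unfold z; ring|ring]. }
  assert (Hzc : cont_on_rect 0 T (- PI) PI z).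
  { apply cont_sub; auto. intros t Ht. apply (hd_cont _ _ _ _ (Hv t Ht)). }
  assert (Hz0 : forall y, Icc (- PI) PI y -> z 0 y < 0).
  { intros y Hy. unfold z, v, u. rewrite Rmult_0_r, exp_0, Hxs0.
    specialize (Hmax y Hy). lra. }
  set (E := fun s => 0 <= s <= T /\ forall r y, 0 <= r <= s -> Icc (- PI) PI y -> z r y <= 0).
  assert (E0 : E 0).
  { split; [lra|]. intros r y Hr Hy. replace r with 0 by lra. left; auto. }
  destruct (completeness E) as [ts [Hub Hlub]].
  { exists T. intros s [Hs _]. lra. }
  { exists 0; auto. }
  assert (Hts0 : 0 <= ts) by (apply Hub; auto).
  assert (HtsT : ts <= T) by (apply Hlub; intros s [Hs _]; lra).
  assert (P1 : forall r y, 0 <= r < ts -> Icc (- PI) PI y -> z r y <= 0).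
  { intros r y Hr Hy.
    destruct (classic (exists s, E s /\ r < s)) as [[s [[_ Es] Hrs]] | Hn].
    - apply Es; auto; lra.
    - exfalso. assert (ts <= r); [|lra]. apply Hlub. intros s Es.
      apply Rnot_lt_le. intro. apply Hn. eauto. }
  assert (P2 : forall y, Icc (- PI) PI y -> z ts y <= 0).
  { intros y Hy. destruct (Rle_dec (z ts y) 0) as [|Hzp]; auto. exfalso.
    destruct (Req_dec ts 0) as [E1|E1].
    { rewrite E1 in Hzp. specialize (Hz0 y Hy). lra. }
    destruct (Hzc ts y ltac:(unfold Icc; lra) Hy (z ts y) ltac:(lra)) as [d [Hd H]].
    set (r := Rmax 0 (ts - d/2)).
    assert (Hr1 : 0 <= r) by apply Rmax_l.
    assert (Hr2 : ts - d/2 <= r) by apply Rmax_r.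
    assert (Hr3 : r < ts) by (unfold r; apply Rmax_lub_lt; lra).
    specialize (H r y ltac:(unfold Icc; lra) Hy).
    rewrite Rminus_diag, Rabs_R0 in H.
    rewrite Rabs_left in H by lra. specialize (H ltac:(lra) Hd).
    specialize (P1 r y ltac:(lra) Hy).
    destruct (Rabs_def2 _ _ H). lra. }
  assert (Ets : forall r y, 0 <= r <= ts -> Icc (- PI) PI y -> z r y <= 0).
  { intros r y Hr Hy. destruct (Req_dec r ts) as [->|]; [auto|apply P1; auto; lra]. }
  intros t x Ht Hx.
  destruct (Req_dec ts T) as [ET|ET].
  { assert (z t x <= 0) by (apply Ets; auto; unfold Icc in Ht; lra).
    unfold z, v in H. lra. }
  exfalso.
  assert (Hn : forall n:nat, exists p : R*R, ts < fst p /\ fst p < ts + / INR (S n) /\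
              Icc 0 T (fst p) /\ Icc (- PI) PI (snd p) /\ 0 < z (fst p) (snd p)).
  { intros n.
    assert (Hin : 0 < / INR (S n)) by (apply Rinv_0_lt_compat, lt_0_INR; lia).
    set (s0 := Rmin T (ts + / INR (S n) / 2)).
    assert (Hs0a : ts < s0) by (unfold s0; apply Rmin_glb_lt; lra).
    assert (Hs0b : s0 <= T) by apply Rmin_l.
    assert (Hs0c : s0 <= ts + / INR (S n) / 2) by apply Rmin_r.
    apply NNPP; intro Hc.
    assert (Es0 : E s0).
    { split; [lra|]. intros r y Hr Hy.
      destruct (Rle_dec r ts). { apply Ets; auto; lra. }
      apply Rnot_lt_le. intro Hp. apply Hc. exists (r, y). cbn [fst snd].
      unfold Icc in *; repeat split; auto; lra. }
    specialize (Hub s0 Es0). lra. }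
  destruct (functional_choice _ Hn) as [f Hf].
  destruct (BW1 (fun n => snd (f n)) (- PI) PI) as [xst [Hxst Hadh]].
  { intros n. apply (Hf n). }
  assert (HzsA : 0 <= z ts xst).
  { apply Rnot_lt_le. intro Hneg.
    destruct (Hzc ts xst ltac:(unfold Icc; lra) Hxst (- z ts xst) ltac:(lra)) as [d [Hd H]].
    destruct (inv_small d Hd) as [Kn HKn].
    destruct (Hadh d Hd Kn) as [p [Hp1 Hp2]].
    destruct (Hf p) as [Hf1 [Hf2 [Hf3 [Hf4 Hf5]]]].
    specialize (HKn p Hp1).
    assert (Rabs (fst (f p) - ts) < d) by (rewrite Rabs_right; lra).
    specialize (H _ _ Hf3 Hf4 H0 Hp2).
    destruct (Rabs_def2 _ _ H). lra. }
  assert (Hzs : z ts xst = 0) by (pose proof (P2 xst Hxst); lra).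
  assert (Htsp : 0 < ts).
  { destruct (Req_dec ts 0) as [E1|E1]; [|lra]. rewrite E1 in Hzs. specialize (Hz0 xst Hxst). lra. }
  assert (Htsi : Icc 0 T ts) by (unfold Icc; lra).
  assert (Hmx : forall y, Icc (- PI) PI y -> a ts y <= a ts xst).
  { intros y Hy. specialize (P2 y Hy). unfold z in P2, Hzs. lra. }
  assert (HAax : RInt (fun y => a ts y) (- PI) xst * ax ts xst = 0).
  { destruct (Req_dec xst (- PI)) as [E1|E1].
    { rewrite E1, RInt_point. simpl. apply Rmult_0_l. }
    destruct (Req_dec xst PI) as [E2|E2].
    { rewrite E2, Hmean; auto. apply Rmult_0_l. }
    rewrite (max_deriv0 (- PI) PI (fun y => a ts y) xst (ax ts xst)).
    - apply Rmult_0_r.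
    - unfold Icc in Hxst; lra.
    - exact (proj2 (proj2 (proj2 HC) ts xst Htsi Hxst)).
    - exact Hmx. }
  assert (Hq := Heq ts xst Htsi Hxst). fold (I ts) in Hq.
  assert (Hat : at_ ts xst = a ts xst ^ 2 - I ts) by lra.
  pose proof (left_deriv_nonneg T (fun s => z s xst) ts _ (Hzd ts xst Htsi Hxst) Htsp HtsT Hzs
     (fun r Hr => P1 r xst Hr Hxst)) as Hnn.
  set (Ee := eps * exp (K * ts)).
  assert (HEe : 0 < Ee) by (unfold Ee; apply Rmult_lt_0_compat; [lra|apply exp_pos]).
  assert (Has : a ts xst = u ts + Ee) by (unfold z, v in Hzs; fold Ee in Hzs; lra).
  assert (Hb1 : a ts xst <= B) by (eapply Rle_trans; [apply Rle_abs|apply HB; auto]).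
  assert (Hb2 : u ts <= B) by (eapply Rle_trans; [apply Rle_abs|apply HB; auto]).
  assert (Hdz : at_ ts xst - (u ts ^ 2 - I ts + eps * (K * exp (K * ts))) = Ee * (a ts xst + u ts - K)).
  { rewrite Hat. unfold Ee. rewrite Has. unfold Ee. ring. }
  rewrite Hdz in Hnn.
  assert (Ee * (a ts xst + u ts - K) < 0).
  { assert (a ts xst + u ts - K < 0) by (unfold K; lra). nra. }
  lra. }
intros t Ht x Hx.
apply Rnot_lt_le. intro Hlt.
set (d := a t x - u t).
assert (Hd : 0 < d) by (unfold d, u in *; lra).
assert (He : 0 < exp (K * t)) by apply exp_pos.
assert (Hep : 0 < d / (2 * exp (K * t))) by (apply Rdiv_lt_0_compat; lra).
specialize (Hclaim _ Hep t x Ht Hx).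
replace (d / (2 * exp (K * t)) * exp (K * t)) with (d / 2) in Hclaim by (field; lra).
fold d in Hclaim. lra.
Qed.
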